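(* If a $\mathsf{BST}^{\otimes}$-conjunction $\Phi$ is fulfilled by a finite accessible $\otimes$-graph that admits a topological $\otimes$-order, then $\Phi$ is satisfied by a hereditarily finite set assignment (i.e. one with $\bigcup_{v}Mv\in\mathsf{HF}$).
   Context: Sets range over the von Neumann universe of well-founded sets; $\mathsf{HF}$ is the set of hereditarily finite sets. For sets $s,t$, $s\otimes t=\{\{u,v\} : u\in s,\ v\in t\}$. A $\mathsf{BST}^{\otimes}$-conjunction is a finite conjunction of literals of the forms $x=y\cup z$, $x=y\setminus z$, $x=y\otimes z$, $x\neq y$; a set assignment $M$ satisfies it if all literals are true when each variable $v$ is interpreted as $Mv$. A $\otimes$-graph $\mathcal G=(\mathcal P,\mathcal N,\mathcal T)$ consists of a set $\mathcal P$ of places, the set of nodes $\mathcal N=\mathcal P\otimes\mathcal P$ (the nonempty subsets of $\mathcal P$ with at most two elements), $\mathcal P\cap\mathcal N=\emptyset$, and a target map $\mathcal T:\mathcal N\to\mathcal P(\mathcal P)$. A source place is a place belonging to no $\mathcal T(A)$; a node $A$ is a $\otimes$-node if $\mathcal T(A)\neq\emptyset$. The accessible places form the smallest set of places containing all source places and containing $\mathcal T(A)$ whenever all places of $A$ belong to it; $\mathcal G$ is accessible if every place is accessible. A topological $\otimes$-order of $\mathcal G$ is a total order $\prec$ on $\mathcal P$ with $\max_\prec A\prec\max_\prec\mathcal T(A)$ for every $\otimes$-node $A$. A map $\mathfrak F:\mathrm{Vars}(\Phi)\to\mathcal P(\mathcal P)$ is $\mathcal G$-fulfilling for $\Phi$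 if: (a) $\mathfrak F(x)=\mathfrak F(y)\star\mathfrak F(z)$ for each conjunct $x=y\star z$, $\star\in\{\cup,\setminus\}$; (b) $\mathfrak F(x)\neq\mathfrak F(y)$ for each conjunct $x\neq y$; (c) for each conjunct $x=y\otimes z$: (c1) $\emptyset\neq\mathcal T(\{\upsilon,\zeta\})\subseteq\mathfrak F(x)$ for all $\upsilon\in\mathfrak F(y),\zeta\in\mathfrak F(z)$; (c2) $\mathfrak F(x)\subseteq\bigcup\{\mathcal T(A):A\in\mathfrak F(y)\otimes\mathfrak F(z)\}$; (c3) $\bigcup\{\mathcal T(A):A\in\mathcal N\setminus(\mathfrak F(y)\otimes\mathfrak F(z))\}\cap\mathfrak F(x)=\emptyset$. $\mathcal G$ fulfills $\Phi$ if such a map exists. *)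

(* Defs.v *)
From HB Require Import structures.
From mathcomp Require Import all_boot.
From Stdlib Require PeanoNat.

Set Implicit Arguments.
Unset Strict Implicit.
Unset Printing Implicit Defensive.

(* Hereditarily finite sets, via the Ackermann coding HF <-> nat:       *)
(*   x \in y  iff  bit x of y is 1.  This is a bijection between HF and  *)
(*   nat that turns set equality into nat equality (extensionality).     *)
Definition hf := nat.
Definition hmem (x y : hf) : bool := PeanoNat.Nat.testbit y x.
Definition hpair (u v : hf) : hf := PeanoNat.Nat.setbit (PeanoNat.Nat.setbit 0 u) v.

Inductive lit :=
| LUnion  of nat & nat & nat   (* x = y \cup z    *)
| LDiff   of nat & nat & nat   (* x = y \setminus z *)
| LTensor of nat & nat & nat   (* x = y \otimes z *)
| LNeq    of nat & nat.        (* x <> y          *)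


Definition lit_eqb (a b : lit) : bool :=
  match a, b with
  | LUnion x y z, LUnion x' y' z' => [&& x == x', y == y' & z == z']
  | LDiff x y z, LDiff x' y' z' => [&& x == x', y == y' & z == z']
  | LTensor x y z, LTensor x' y' z' => [&& x == x', y == y' & z == z']
  | LNeq x y, LNeq x' y' => (x == x') && (y == y')
  | _, _ => false
  end.
Lemma lit_eqP : Equality.axiom lit_eqb.
Proof.
case=> [x y z|x y z|x y z|x y] [x' y' z'|x' y' z'|x' y' z'|x' y'] /=;
  try (by constructor);
  try (apply: (iffP and3P) => [[/eqP-> /eqP-> /eqP->]|[-> -> ->]] //; by split);
  apply: (iffP andP) => [[/eqP-> /eqP->]|[-> ->]] //; by split.
Qed.
HB.instance Definition _ := hasDecEq.Build lit lit_eqP.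

Definition lit_sat (M : nat -> hf) (l : lit) : Prop :=
  match l with
  | LUnion x y z => forall w, hmem w (M x) <-> (hmem w (M y) \/ hmem w (M z))
  | LDiff x y z => forall w, hmem w (M x) <-> (hmem w (M y) /\ ~~ hmem w (M z))
  | LTensor x y z => forall w, hmem w (M x) <->
        exists u v, [/\ hmem u (M y), hmem v (M z) & w = hpair u v]
  | LNeq x y => M x <> M y
  end.

Definition satisfies (M : nat -> hf) (Phi : seq lit) : Prop :=
  forall l, l \in Phi -> lit_sat M l.


(* the target map T is given on all of {set P} but only its values on   *)
(* nodes are ever used.                                                 *)
Section Graph.
Variable P : finType.
Variable T : {set P} -> {set P}.

Definition is_node (A : {set P}) : bool := (0 < #|A| <= 2).

Definition in_otimes (S S' : {set P}) (A : {set P}) : Prop :=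
  exists u v, [/\ u \in S, v \in S' & A = [set u; v]].

Definition source_place (p : P) : Prop :=
  forall A, is_node A -> p \notin T A.

Definition otimes_node (A : {set P}) : Prop := is_node A /\ T A != set0.

Inductive accessible : P -> Prop :=
| acc_src p : source_place p -> accessible p
| acc_step A p : is_node A -> (forall a, a \in A -> accessible a) ->
                 p \in T A -> accessible p.

Definition accessible_graph : Prop := forall p : P, accessible p.

Definition strict_total_order (lt : rel P) : Prop :=
  [/\ forall p, ~~ lt p p,
      forall p q r, lt p q -> lt q r -> lt p r &
      forall p q, p != q -> lt p q || lt q p].

Definition is_max (lt : rel P) (A : {set P}) (m : P) : Prop :=
  m \in A /\ forall a, a \in A -> a = m \/ lt a m.

Definition topological_order (lt : rel P) : Prop :=
  strict_total_order lt /\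
  forall A, otimes_node A ->
    forall m1 m2, is_max lt A m1 -> is_max lt (T A) m2 -> lt m1 m2.

Definition lit_fulfilled (F : nat -> {set P}) (l : lit) : Prop :=
  match l with
  | LUnion x y z => F x = F y :|: F z
  | LDiff x y z => F x = F y :\: F z
  | LNeq x y => F x <> F y
  | LTensor x y z =>
      [/\ forall u v, u \in F y -> v \in F z ->
                     T [set u; v] != set0 /\ T [set u; v] \subset F x,
          forall p, p \in F x ->
                     exists A, in_otimes (F y) (F z) A /\ p \in T A &
          forall A, is_node A -> ~ in_otimes (F y) (F z) A ->
                     T A :&: F x = set0]
  end.

Definition fulfilling (F : nat -> {set P}) (Phi : seq lit) : Prop :=
  forall l, l \in Phi -> lit_fulfilled F l.

Definition fulfills (Phi : seq lit) : Prop := exists F, fulfilling F Phi.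

End Graph.

(* Main.v *)
Require Import Defs.
From mathcomp Require Import all_boot zify.
From Stdlib Require PeanoNat Lia Classical.

Definition enc (s : seq nat) : nat := foldr (fun w acc => PeanoNat.Nat.setbit acc w) 0 s.

Lemma hmem_enc x s : hmem x (enc s) = (x \in s).
Proof.
elim: s => [|a s IH] /=; rewrite /hmem /=; first by rewrite PeanoNat.Nat.bits_0.
case: (eqVneq a x) => [->|ne]; first by rewrite PeanoNat.Nat.setbit_eq in_cons eqxx.
rewrite PeanoNat.Nat.setbit_neq; last by apply/eqP.
by rewrite in_cons eq_sym (negbTE ne); exact: IH.
Qed.

Lemma hmem_pair x u v : hmem x (hpair u v) = (x == v) || (x == u).
Proof. by rewrite -[hpair u v]/(enc [:: v; u]) hmem_enc !inE. Qed.

Lemma hext a b : (forall x, hmem x a = hmem x b) -> a = b.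
Proof. by move=> H; apply: PeanoNat.Nat.bits_inj => x; exact: H. Qed.

Lemma hmem_lt u w : hmem u w -> u < w.
Proof.
rewrite /hmem; case: w => [|w]; first by rewrite PeanoNat.Nat.bits_0.
rewrite ltnNge; apply: contraTN => le.
apply/negP; rewrite PeanoNat.Nat.bits_above_log2 //.
have := PeanoNat.Nat.log2_lt_lin w.+1; move/(_ (ltac:(Lia.lia))). move/leP: le. Lia.lia.
Qed.

Lemma lt_pow_mem w m : (forall u, hmem u w -> u < m) -> w < PeanoNat.Nat.pow 2 m.
Proof.
case: w => [|w] H; first by apply/ltP; have := PeanoNat.Nat.pow_nonzero 2 m; Lia.lia.
have hl := H _ (PeanoNat.Nat.bit_log2 w.+1 ltac:(Lia.lia)).
have [_ h2] := PeanoNat.Nat.log2_spec w.+1 ltac:(Lia.lia).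
have h3 := PeanoNat.Nat.pow_le_mono_r 2 (S (PeanoNat.Nat.log2 w.+1)) m ltac:(Lia.lia) ltac:(move/ltP: hl; Lia.lia).
apply/ltP; Lia.lia.
Qed.

Lemma pair_cases (X : eqType) (x1 x2 y1 y2 : X) :
  (forall z, (z == x1) || (z == x2) = (z == y1) || (z == y2)) ->
  (x1 = y1 /\ x2 = y2) \/ (x1 = y2 /\ x2 = y1).
Proof.
move=> H.
have h1 := H x1; have h2 := H x2; have h3 := H y1; have h4 := H y2.
rewrite !eqxx ?orbT /= in h1 h2 h3 h4.
move/esym/orP: h1 => [/eqP e1|/eqP e1]; move/esym/orP: h2 => [/eqP e2|/eqP e2];
move/orP: h3 => [/eqP e3|/eqP e3]; move/orP: h4 => [/eqP e4|/eqP e4]; subst; auto.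
Qed.

Lemma hpairC u v : hpair u v = hpair v u.
Proof. by apply: hext => x; rewrite !hmem_pair orbC. Qed.

Set Implicit Arguments.
Unset Strict Implicit.
Unset Printing Implicit Defensive.

Lemma set2_cases (X : finType) (p q a b : X) :
  [set p; q] = [set a; b] -> (p = a /\ q = b) \/ (p = b /\ q = a).
Proof.
move=> E; apply: pair_cases => z.
by rewrite -!in_set2 E.
Qed.

Lemma node_set2 (X : finType) (u v : X) : is_node [set u; v].
Proof. by rewrite /is_node cards2; case: (u != v). Qed.

Lemma node2 (X : finType) (A : {set X}) : is_node A -> exists x y, A = [set x; y].
Proof.
rewrite /is_node => /andP [h1 h2].
have : (#|A| == 1) || (#|A| == 2) by lia.
case/orP => [/cards1P [x ->]|/cards2P [x [y [_ ->]]]]; last by exists x, y.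
by exists x, x; rewrite setUid.
Qed.

Section Constr.
Variables (P : finType) (T : {set P} -> {set P}) (lt : rel P) (d0 : P).
Hypothesis hacc : accessible_graph T.
Hypothesis htop : topological_order T lt.

Definition srcb (p : P) := [forall A : {set P}, is_node A ==> (p \notin T A)].
Lemma srcbP p : reflect (source_place T p) (srcb p).
Proof.
apply: (iffP forallP) => H A.
  by move=> nA; have := H A; rewrite nA.
by apply/implyP => nA; exact: H.
Qed.

Fixpoint S k : {set P} :=
  if k is k'.+1 then S k' :|: [set r | [exists A : {set P}, [&& is_node A, A \subset S k' & r \in T A]]]
  else [set p | srcb p].

Lemma S_mono k l : k <= l -> S k \subset S l.
Proof.
move=> kl; rewrite -(subnKC kl); elim: (l - k) => [|m IH]; first by rewrite addn0.
by rewrite addnS /=; apply: subset_trans IH _; exact: subsetUl.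
Qed.

Lemma accS p : accessible T p -> exists k, p \in S k.
Proof.
elim=> [q sq|A q nA _ IH qT]; first by exists 0; rewrite inE; apply/srcbP.
have [x [y eA]] := node2 nA.
have [kx hx] := IH x ltac:(by rewrite eA !inE eqxx).
have [ky hy] := IH y ltac:(by rewrite eA !inE eqxx orbT).
exists (maxn kx ky).+1; rewrite /= !inE; apply/orP; right.
apply/existsP; exists A; rewrite nA qT andbT /=.
apply/subsetP => z; rewrite eA !inE => /orP [] /eqP ->.
  by apply: (subsetP (S_mono (leq_maxl kx ky))).
by apply: (subsetP (S_mono (leq_maxr kx ky))).
Qed.

Definition rank p := ex_minn (accS (hacc p)).
Lemma rank_in p : p \in S (rank p).
Proof. by rewrite /rank; case: ex_minnP. Qed.
Lemma rank_min p k : p \in S k -> rank p <= k.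
Proof. by rewrite /rank; case: ex_minnP => m _ H; exact: H. Qed.

Definition Ar (r : P) : option {set P} :=
  [pick A | [&& is_node A, A \subset S (rank r).-1 & r \in T A]].

Lemma Ar_None r : Ar r = None -> srcb r.
Proof.
rewrite /Ar; case: pickP => // H _.
have := rank_in r; case E: (rank r) => [|k]; first by rewrite inE.
rewrite /= inE => /orP [hk|].
  by have := rank_min hk; rewrite E ltnn.
rewrite inE => /existsP [A hA]; have := H A; rewrite E /= hA //.
Qed.

Lemma Ar_Some r A : Ar r = Some A ->
  [/\ is_node A, r \in T A & forall a, a \in A -> rank a < rank r].
Proof.
rewrite /Ar; case: pickP => // B /and3P [nB sB rB] [<-]; split => // a aB.
have ha := rank_min (subsetP sB a aB).
case E: (rank r) => [|k]; last by rewrite E /= in ha; lia.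
exfalso; have := rank_in r; rewrite E inE => /srcbP sr.
by have := sr B nB; rewrite rB.
Qed.

Definition oa (A : {set P}) := odflt d0 [pick x in A].
Definition ob (A : {set P}) := odflt (oa A) [pick x in A :\ oa A].

Lemma orient_ok A : is_node A -> A = [set oa A; ob A].
Proof.
move=> nA; have [x [y eA]] := node2 nA.
have aA : oa A \in A.
  rewrite /oa; case: pickP => [//|H]; by have := H x; rewrite eA !inE eqxx.
rewrite /ob; case: pickP => [b|H].
  rewrite !inE => /andP [ba bA].
  move: aA bA ba; set a := oa A; rewrite eA !inE.
  by case/orP=> [/eqP ->|/eqP ->]; case/orP=> [/eqP ->|/eqP ->]; rewrite ?eqxx //= setUC.
apply/setP => z; rewrite !inE orbb; apply/idP/eqP => [zA|->//].
by apply/eqP; have := H z; rewrite !inE zA andbT; move/negbFE.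
Qed.

Lemma oab_in A : is_node A -> oa A \in A /\ ob A \in A.
Proof. move=> nA; have E := orient_ok nA; split; by rewrite [in X in _ \in X]E !inE eqxx ?orbT. Qed.

Definition K := (2 * #|P|).+1.
Definition idx (r : P) : nat := enum_rank r.
Lemma idx_lt r : idx r < #|P|.
Proof. by rewrite /idx; case: (enum_rank r) => i; rewrite cardT. Qed.
Lemma idx_inj r r' : idx r = idx r' -> r = r'.
Proof. by move=> h; apply: enum_rank_inj; apply: val_inj. Qed.
Definition off r t := (t + idx r + 1) %% K.
Lemma off_lt r t : off r t < K.
Proof. by rewrite /off ltn_pmod. Qed.
Definition code r t := idx r * K + t.
Definition seed r t := enc [:: 0; 1; (code r t).+2].

Lemma hmem_seed z r t : hmem z (seed r t) = [|| z == 0, z == 1 | z == (code r t).+2].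
Proof. by rewrite hmem_enc !inE. Qed.

Lemma code_inj r r' t t' : t < K -> t' < K -> code r t = code r' t' -> r = r' /\ t = t'.
Proof.
move=> ht ht' E.
have e1 : code r t %/ K = idx r by rewrite /code divnMDl // divn_small // addn0.
have e2 : code r' t' %/ K = idx r' by rewrite /code divnMDl // divn_small // addn0.
have ei : idx r = idx r' by rewrite -e1 -e2 E.
split; first exact: idx_inj.
by move: E; rewrite /code ei => /eqP; rewrite eqn_add2l => /eqP.
Qed.

Lemma seed_inj r r' t t' : t < K -> t' < K -> seed r t = seed r' t' -> r = r' /\ t = t'.
Proof.
move=> ht ht' E; apply: code_inj => //.
have := hmem_seed (code r t).+2 r t; rewrite E hmem_seed eqxx orbT /=.
by move/eqP; case.
Qed.

Lemma seed_not_pair r t u v : seed r t <> hpair u v.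
Proof.
move=> E.
have h0 := hmem_seed 0 r t; have h1 := hmem_seed 1 r t; have h2 := hmem_seed (code r t).+2 r t.
rewrite E !hmem_pair /= eqxx in h0 h1 h2.
by move: h0 h1 h2; case/orP => [/eqP|/eqP] h0; case/orP => [/eqP|/eqP] h1; case/orP => [/eqP|/eqP] h2; lia.
Qed.

Fixpoint EF f r t :=
  if f is f'.+1 then
    (if Ar r is Some A then hpair (EF f' (oa A) t) (EF f' (ob A) (off r t)) else seed r t)
  else seed r t.

Lemma Ar_lt r A : Ar r = Some A -> [/\ is_node A, r \in T A, rank (oa A) < rank r & rank (ob A) < rank r].
Proof.
move=> E; have [nA rA H] := Ar_Some E; have [h1 h2] := oab_in nA.
by split => //; apply: H.
Qed.

Lemma EF_stable f g r t : rank r <= f -> rank r <= g -> EF f r t = EF g r t.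
Proof.
elim: f g r t => [|f IH] [|g] r t /= hf hg //.
- case E: (Ar r) => [A|] //; have [_ _ h _] := Ar_lt E; lia.
- case E: (Ar r) => [A|] //; have [_ _ h _] := Ar_lt E; lia.
case E: (Ar r) => [A|] //; have [_ _ h1 h2] := Ar_lt E.
by rewrite (IH g (oa A)) ?(IH g (ob A)) //; lia.
Qed.

Definition e r t := EF (rank r) r t.

Lemma e_eq r t : e r t = if Ar r is Some A then hpair (e (oa A) t) (e (ob A) (off r t)) else seed r t.
Proof.
rewrite /e; case E: (Ar r) => [A|]; case Er: (rank r) => [|k] /=; rewrite ?E //.
  by have [_ _ h _] := Ar_lt E; lia.
have [_ _ h1 h2] := Ar_lt E.
by rewrite (EF_stable (g := rank (oa A))) ?(EF_stable (f := k) (g := rank (ob A))) //; lia.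
Qed.

Lemma modK x : x < 2 * K -> x %% K = if x < K then x else x - K.
Proof.
move=> h; case: ifP => hx; first by rewrite modn_small.
have -> : x = 1 * K + (x - K) by lia.
by rewrite modnMDl modn_small; lia.
Qed.

Lemma e_inj w : forall r r' t t', t < K -> t' < K -> e r t = w -> e r' t' = w -> r = r' /\ t = t'.
Proof.
elim/ltn_ind: w => w IH r r' t t' ht ht' E1 E2.
rewrite e_eq in E1; rewrite e_eq in E2.
case Er: (Ar r) E1 => [A|] E1; case Er': (Ar r') E2 => [A'|] E2; last first.
- by apply: seed_inj => //; rewrite E1 E2.
- by exfalso; apply: (@seed_not_pair r t (e (oa A') t') (e (ob A') (off r' t'))); rewrite E1.
- by exfalso; apply: (@seed_not_pair r' t' (e (oa A) t) (e (ob A) (off r t))); rewrite E2.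
have [nA rA _ _] := Ar_lt Er; have [nA' rA' _ _] := Ar_lt Er'.
have lt1 : e (oa A) t < w by apply: hmem_lt; rewrite -E1 hmem_pair eqxx orbT.
have lt2 : e (ob A) (off r t) < w by apply: hmem_lt; rewrite -E1 hmem_pair eqxx.
have hs := off_lt r t; have hs' := off_lt r' t'.
have := @pair_cases _ (e (oa A) t) (e (ob A) (off r t)) (e (oa A') t') (e (ob A') (off r' t')).
case.
  by move=> z; rewrite orbC [RHS]orbC -!hmem_pair E1 E2.
- move=> [h1 h2].
  have [a1 t1] := IH _ lt1 _ _ _ _ ht ht' erefl (esym h1).
  have [a2 t2] := IH _ lt2 _ _ _ _ hs hs' erefl (esym h2).
  have eA : A = A' by rewrite (orient_ok nA) (orient_ok nA') a1 a2.
  subst t'; split => //; apply: idx_inj.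
  have i1 := idx_lt r; have i2 := idx_lt r'; have hK : K = (2*#|P|).+1 by [].
  move: t2; rewrite /off !modK; try lia.
  by case: ifP; case: ifP; lia.
- move=> [h1 h2].
  have [a1 t1] := IH _ lt1 _ _ _ _ ht hs' erefl (esym h1).
  have [a2 t2] := IH _ lt2 _ _ _ _ hs ht' erefl (esym h2).
  exfalso.
  have i1 := idx_lt r; have i2 := idx_lt r'; have hK : K = (2*#|P|).+1 by [].
  move: t1 t2; rewrite /off !modK; try lia.
  by case: ifP; case: ifP; lia.
Qed.

Definition mxs (X : {set P}) := odflt d0 [pick m in X | [forall a in X, (a == m) || lt a m]].
Definition pos m := #|[set a | lt a m]|.

Lemma lt_irr a : ~~ lt a a.
Proof. by case: htop => [[]]. Qed.
Lemma lt_trans a b c : lt a b -> lt b c -> lt a c.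
Proof. by case: htop => [[_ h _]] _; exact: h. Qed.
Lemma lt_total a b : a != b -> lt a b || lt b a.
Proof. by case: htop => [[_ _ h]] _; exact: h. Qed.

Lemma pos_lt a b : lt a b -> pos a < pos b.
Proof.
move=> ab; apply: proper_card; apply/properP; split.
  by apply/subsetP => x; rewrite !inE => xa; exact: lt_trans xa ab.
by exists a; rewrite !inE ?ab ?(negbTE (lt_irr a)).
Qed.

Lemma mxs_spec X : X != set0 -> mxs X \in X /\ forall a, a \in X -> a = mxs X \/ lt a (mxs X).
Proof.
case/set0Pn => x0 xX.
rewrite /mxs; case: pickP => [m /andP [mX /forallP H]|H].
  split => // a aX; have := H a; rewrite aX /= => /orP [/eqP|] ; auto.
exfalso.
case: (arg_maxnP pos xX) => m mX Hm.
have mX' : m \in X := mX; have := H m; rewrite /= mX' /=; move/negP; apply; apply/forallP => a; apply/implyP => aX.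
case: (eqVneq a m) => //= am; have := lt_total am; case/orP => // ma.
have := Hm a aX; have := pos_lt ma; lia.
Qed.

Lemma lt_mx A p : is_node A -> T A != set0 -> p \in A -> lt p (mxs (T A)).
Proof.
move=> nA nT pA.
have nA0 : A != set0 by apply/set0Pn; exists p.
have [m1A m1H] := mxs_spec nA0; have [m2A m2H] := mxs_spec nT.
have h : lt (mxs A) (mxs (T A)).
  by case: htop => _ H; apply: (H A); split.
by case: (m1H p pA) => [->//|h']; exact: lt_trans h' h.
Qed.

Definition target (A : {set P}) (w : nat) :=
  if [pick rt : P * 'I_K | e rt.1 rt.2 == w] is Some rt then
    (if rt.1 \in T A then rt.1 else mxs (T A))
  else mxs (T A).

Lemma target_in A w : T A != set0 -> target A w \in T A.
Proof.
move=> nT; have [h _] := mxs_spec nT.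
by rewrite /target; case: pickP => [rt _|_] //; case: ifP.
Qed.

Definition clsB (rec : nat -> option P) (w : nat) : option P :=
  if [pick uv : 'I_w * 'I_w | w == hpair uv.1 uv.2] is Some uv then
    (if rec uv.1 is Some p then
       (if rec uv.2 is Some q then
          (if T [set p; q] != set0 then Some (target [set p; q] w) else None)
        else None)
     else None)
  else if [pick rt : P * 'I_K | w == seed rt.1 rt.2] is Some rt then
    (if srcb rt.1 then Some rt.1 else None)
  else None.

Lemma clsB_ext rec rec' w : (forall u, u < w -> rec u = rec' u) -> clsB rec w = clsB rec' w.
Proof.
move=> H; rewrite /clsB; case: pickP => [uv _|_] //.
by rewrite !H ?ltn_ord.
Qed.

Fixpoint clsF f w := if f is f'.+1 then clsB (clsF f') w else None.
Definition cls w := clsF w.+1 w.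

Lemma clsF_stable f g w : w < f -> w < g -> clsF f w = clsF g w.
Proof.
elim: f g w => [|f IH] [|g] w //= hf hg.
by apply: clsB_ext => u uw; apply: IH; lia.
Qed.

Lemma cls_eq w : cls w = clsB cls w.
Proof.
rewrite /cls /=; apply: clsB_ext => u uw; exact: (clsF_stable uw (ltnSn u)).
Qed.

Lemma cls_pair u v p q : cls u = Some p -> cls v = Some q -> T [set p; q] != set0 ->
  cls (hpair u v) = Some (target [set p; q] (hpair u v)).
Proof.
move=> cu cv nT; rewrite cls_eq /clsB.
case: pickP => [[u' v'] /= /eqP E|H]; last first.
  have hu : u < hpair u v by apply: hmem_lt; rewrite hmem_pair eqxx orbT.
  have hv : v < hpair u v by apply: hmem_lt; rewrite hmem_pair eqxx.
  by have := H (Ordinal hu, Ordinal hv); rewrite /= eqxx.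
have := @pair_cases _ (nat_of_ord v') (nat_of_ord u') v u.
case.
- by move=> z; rewrite -!hmem_pair -E.
- by move=> [-> ->]; rewrite cu cv nT.
- by move=> [-> ->]; rewrite cu cv setUC nT.
Qed.

Lemma cls_inv w r : cls w = Some r ->
  (exists u v p q, [/\ w = hpair u v, cls u = Some p, cls v = Some q,
      T [set p; q] != set0 & r = target [set p; q] w]) \/
  (srcb r /\ exists t, t < K /\ w = seed r t).
Proof.
rewrite cls_eq /clsB; case: pickP => [[u v] /= /eqP E|_].
  case E1: (cls u) => [p|] //; case E2: (cls v) => [q|] //.
  case: ifP => // nT [<-]; left; by exists u, v, p, q.
case: pickP => [[r' t] /= /eqP E|_] //.
case: ifP => // s [<-]; right; split => //; exists t; split => //.
Qed.

Lemma cls_seed_src r t : Ar r = None -> t < K -> cls (seed r t) = Some r.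
Proof.
move=> E ht; rewrite cls_eq /clsB; case: pickP => [[u v] /= /eqP E'|_].
  by exfalso; exact: seed_not_pair E'.
case: pickP => [[r' t'] /= /eqP E'|H].
  have [<- _] := seed_inj ht (ltn_ord t') E'.
  by rewrite (Ar_None E).
by have := H (r, Ordinal ht); rewrite /= eqxx.
Qed.

Lemma cls_e r t : t < K -> cls (e r t) = Some r.
Proof.
move=> ht; suff: forall n r t, rank r <= n -> t < K -> cls (e r t) = Some r.
  by move=> H; apply: (H (rank r)).
elim=> [|n IH] {}r {}t hr {}ht; rewrite e_eq; case E: (Ar r) => [A|].
- by have [_ _ h _] := Ar_lt E; lia.
- exact: cls_seed_src.
- have [nA rA h1 h2] := Ar_lt E.
  have c1 := IH (oa A) t ltac:(lia) ht.
  have c2 := IH (ob A) (off r t) ltac:(lia) (off_lt r t).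
  have nT : T [set oa A; ob A] != set0 by rewrite -(orient_ok nA); apply/set0Pn; exists r.
  rewrite (cls_pair c1 c2 nT) -(orient_ok nA).
  have ew : hpair (e (oa A) t) (e (ob A) (off r t)) = e r t by rewrite (e_eq r t) E.
  rewrite /target; case: pickP => [[r' t'] /= /eqP E'|H].
    have [-> _] := e_inj (ltn_ord t') ht E' (esym ew).
    by rewrite rA.
  by have := H (r, Ordinal ht); rewrite /= ew eqxx.
- exact: cls_seed_src.
Qed.

Definition C := (\max_(rt : P * 'I_K) maxn (e rt.1 rt.2) (seed rt.1 rt.2)).+1.
Fixpoint bnd k := if k is k'.+1 then maxn C (PeanoNat.Nat.pow 2 (bnd k')) else C.

Lemma bnd_ge_C k : C <= bnd k.
Proof. by case: k => [|k] //=; exact: leq_maxl. Qed.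

Lemma bnd_step k : bnd k <= bnd k.+1.
Proof.
rewrite /=; apply: leq_trans (leq_maxr _ _).
have := PeanoNat.Nat.pow_gt_lin_r 2 (bnd k) ltac:(lia); move/ltP; lia.
Qed.

Lemma bnd_mono k l : k <= l -> bnd k <= bnd l.
Proof.
move=> kl; rewrite -(subnKC kl); elim: (l - k) => [|m IH]; first by rewrite addn0.
by rewrite addnS; apply: leq_trans IH (bnd_step _).
Qed.

Lemma small_e r t : t < K -> e r t < C.
Proof.
move=> ht; have := @leq_bigmax _ (fun rt : P * 'I_K => maxn (e rt.1 rt.2) (seed rt.1 rt.2)) (r, Ordinal ht).
rewrite /C /=; lia.
Qed.

Lemma small_seed r t : t < K -> seed r t < C.
Proof.
move=> ht; have := @leq_bigmax _ (fun rt : P * 'I_K => maxn (e rt.1 rt.2) (seed rt.1 rt.2)) (r, Ordinal ht).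
rewrite /C /=; lia.
Qed.

Lemma cls_bound k : forall w r, pos r <= k -> cls w = Some r -> w < bnd k.
Proof.
elim: k => [|k IH] w r hr H; case/cls_inv: H => [[u [v [p [q [Ew cu cv nT Er]]]]] | [sr [t [ht Ew]]]];
  try (by rewrite Ew; apply: leq_trans (small_seed r ht) (bnd_ge_C _));
  (have [small | Emx] : w < C \/ r = mxs (T [set p; q]);
   [ move: Er; rewrite /target; case: pickP => [[r' t'] /= /eqP E'|_]; last (by right);
     case: ifP => _ Er; [left; rewrite -E'; exact: small_e | by right]
   | exact: leq_trans small (bnd_ge_C _) | ]);
  have hp := pos_lt (@lt_mx [set p; q] p (node_set2 p q) nT (ltac:(by rewrite !inE eqxx)));
  have hq := pos_lt (@lt_mx [set p; q] q (node_set2 p q) nT (ltac:(by rewrite !inE eqxx orbT)));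
  rewrite -Emx in hp hq; first lia.
have bu := IH u p ltac:(lia) cu; have bv := IH v q ltac:(lia) cv.
rewrite Ew /=; apply: leq_trans (leq_maxr _ _).
by apply: lt_pow_mem => z; rewrite hmem_pair => /orP [] /eqP ->.
Qed.

Definition B := bnd #|P|.
Lemma cls_lt_B w r : cls w = Some r -> w < B.
Proof. by apply: cls_bound; rewrite /pos max_card. Qed.

Definition clsin (X : {set P}) w := if cls w is Some r then r \in X else false.
Definition M (F : nat -> {set P}) x := enc [seq w <- iota 0 B | clsin (F x) w].

Lemma hmem_M F x w : hmem w (M F x) = clsin (F x) w.
Proof.
rewrite hmem_enc mem_filter mem_iota add0n /clsin.
by case E: (cls w) => [r|] //; rewrite (cls_lt_B E) leq0n !andbT.
Qed.


Lemma sat_main Phi F : fulfilling T F Phi -> satisfies (M F) Phi.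
Proof.
move=> HF l lP; have := HF l lP; case: l {lP} => [x y z|x y z|x y z|x y] /=.
- move=> Ex w; rewrite !hmem_M /clsin Ex.
  case: (cls w) => [r|] /=; last by split => // [[]].
  by rewrite inE; split => /orP.
- move=> Ex w; rewrite !hmem_M /clsin Ex.
  case: (cls w) => [r|] /=; last by split => // [[]].
  by rewrite inE andbC; split => /andP.
- move=> [c1 c2 c3] w; split.
  + rewrite hmem_M /clsin; case E: (cls w) => [r|] // rx.
    have [A' [[a' [b' [a'y b'z eA']]] rA']] := c2 r rx.
    case/cls_inv: E => [[u [v [p [q [Ew cu cv nT Er]]]]] | [sr _]]; last first.
      exfalso; have := (srcbP r sr) A'; rewrite eA' in rA' *.
      by move/(_ (node_set2 a' b')); rewrite rA'.
    have rT : r \in T [set p; q] by rewrite Er target_in.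
    have io : in_otimes (F y) (F z) [set p; q].
      apply: Classical_Prop.NNPP => nio; have := c3 _ (node_set2 p q) nio.
      by move/setP/(_ r); rewrite !inE rT rx.
    case: io => [a [b [ay bz eq]]].
    case: (set2_cases eq) => [[ea eb]|[ea eb]]; subst.
      by exists u, v; rewrite !hmem_M /clsin cu cv; split.
    by exists v, u; rewrite !hmem_M /clsin cu cv hpairC; split.
  + move=> [u [v [hu hv ->]]]; move: hu hv; rewrite !hmem_M /clsin.
    case cu: (cls u) => [p|] // py; case cv: (cls v) => [q|] // qz.
    have [nT sub] := c1 p q py qz.
    by rewrite (cls_pair cu cv nT); exact: (subsetP sub) (target_in _ nT).
- move=> neq E; apply: neq; apply/setP => r.
  have := hmem_M F x (e r 0); rewrite E hmem_M /clsin cls_e //.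
Qed.
End Constr.

Theorem lemma15 (Phi : seq lit) (P : finType) (T : {set P} -> {set P}) :
  accessible_graph T ->
  (exists lt : rel P, topological_order T lt) ->
  fulfills T Phi ->
  exists M : nat -> hf, satisfies M Phi.
Proof.
move=> hacc [lt htop] [F HF].
case: (pickP (fun _ : P => true)) => [d0 _|H0].
  by eexists; exact: (sat_main d0 hacc htop HF).
have X0 : forall X : {set P}, X = set0.
  by move=> X; apply/setP => p; have := H0 p.
exists (fun _ => 0) => l lP; have := HF l lP.
case: l {lP} => [x y z|x y z|x y z|x y] /=; rewrite /hmem;
  try (by move=> _ w; rewrite PeanoNat.Nat.bits_0; split => // [[]]).
- move=> _ w; rewrite PeanoNat.Nat.bits_0; split => // [[u [v []]]].
  by rewrite PeanoNat.Nat.bits_0.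
- by move=> neq _; apply: neq; rewrite (X0 (F x)) (X0 (F y)).
Qed.
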